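(* Let $t\le n-2$. In every run of $P^{\min}$ in the context $\gamma_{\min,n,t}$, a total of exactly $n^2$ non-$\bot$ messages are sent, each an element of $\{0,1\}$, so $n^2$ bits are sent in total. In every run of $P^{\mathit{basic}}$ in the context $\gamma_{\mathit{basic},n,t}$, at most $O(n^2t)$ bits are sent in total (each non-$\bot$ message being one of the three values $0,1,(\mathit{init},1)$, encoded with a constant number of bits). Here $P^{\min}_i$ is: if $\mathit{decided}_i\ne\bot$ then $\mathtt{noop}$; else if $\mathit{init}_i=0$ or $\mathit{rd}_i=0$ then $\mathtt{decide}_i(0)$; else if $\mathit{time}_i=t+1$ then $\mathtt{decide}_i(1)$; else $\mathtt{noop}$. And $P^{\mathit{basic}}_i$ is: if $\mathit{decided}_i\ne\bot$ then $\mathtt{noop}$; else if $\mathit{init}_i=0$ or $\mathit{rd}_i=0$ then $\mathtt{decide}_i(0)$; else if $\#1_i>n-\mathit{time}_i$ or $\mathit{rd}_i=1$ then $\mathtt{decide}_i(1)$; else $\mathtt{noop}$.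
   Context: Agents and runs. There are $n$ agents $\mathit{Agt}=\{1,\ldots,n\}$; time is $m\in\mathbb N$, and round $m+1$ is the step from time $m$ to time $m+1$. An information-exchange protocol specifies for each agent $i$ local states, initial states, actions $\{\mathtt{decide}_i(0),\mathtt{decide}_i(1),\mathtt{noop}\}$, a message function $\mu_{ij}(s,a)$ giving the message ($\bot$ = none) that $i$ sends to each agent $j$ (including $j=i$) when performing $a$ in state $s$, and a transition function. A failure pattern is a pair $(\mathcal N,F)$ with $\mathcal N\subseteq\mathit{Agt}$ and $F:\mathbb N\times\mathit{Agt}\times\mathit{Agt}\to\{0,1\}$, $F(m,i,j)=0$ meaning the round-$(m+1)$ message from $i$ to $j$ is lost. $SO(t)$ is the set of failure patterns with $|\mathit{Agt}\setminus\mathcal N|\le t$ and $F(m,i,j)=0\Rightarrow i\notin\mathcal N$. An action protocol $P$ maps local states to actions; together with an initial global state it determines a run: at each time $k$ each agent $i$ performs $a_i=P_i(r_i(k))$, sends $\mu_{ij}(r_i(k),a_i)$ to each $j$ (received iff $F(k,i,j)=1$), and updates its state. Minimal and basic contexts. $\gamma_{\min,n,t}$: failure model $SO(t)$; local states $\langle\mathit{time}_i,\mathit{init}_i,\mathit{decided}_i,\mathit{rd}_i\rangle$, initial states $\langle0,\mathit{init}_i,\bot,\bot\rangle$ with $\mathit{init}_i\in\{0,1\}$; $\mu_{ij}(s,\mathtt{decide}_i(v))=v$ and $\mu_{ij}(s,\mathtt{noop})=\bot$ for all $j$; the transition increments $\mathit{time}_i$, sets $\mathit{decided}_i:=v$ on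 action $\mathtt{decide}_i(v)$ (else unchanged), and sets $\mathit{rd}_i$ to $0$ (resp. $1$) if in that round $i$ received the message $0$ (resp. $1$), else $\bot$. $\gamma_{\mathit{basic},n,t}$: failure model $SO(t)$; local states $\langle\mathit{time}_i,\mathit{init}_i,\mathit{decided}_i,\mathit{rd}_i,\#1_i\rangle$, $\#1_i\in\{0,\ldots,n\}$, initial states $\langle0,\mathit{init}_i,\bot,\bot,0\rangle$; $\mu_{ij}(s,\mathtt{decide}_i(v))=v$, $\mu_{ij}(s,\mathtt{noop})=(\mathit{init},1)$ if $s$ has the form $\langle m,1,\bot,\bot,k\rangle$, and $\bot$ otherwise; the transition updates the first four components as in the minimal context and sets $\#1_i$ to the number of $(\mathit{init},1)$ messages received in the current round if $\mathit{decided}_i=\bot$ and $i$ receives no message $0$ or $1$ in that round, and to $0$ otherwise. *)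

(* Defs.v *)
From mathcomp Require Import all_boot.
Set Implicit Arguments. Unset Strict Implicit. Unset Printing Implicit Defensive.

Inductive action := Decide of bool | Noop.

(** Failure model SO(t): [N] is the set of nonfaulty agents; [F m i j = false]
    means the round-(m+1) message from i to j is lost. *)
Definition SO (n t : nat) (N : {set 'I_n}) (F : nat -> 'I_n -> 'I_n -> bool) : Prop :=
  #|~: N| <= t /\ (forall m i j, F m i j = false -> i \notin N).

Section Run.
Variables (n : nat) (S Msg : Type).
Variable P : S -> action.
(** message function mu i j s a ([None] = bottom) *)
Variable mu : 'I_n -> 'I_n -> S -> action -> option Msg.
(** transition: current state, performed action, received messages (indexed by sender) *)
Variable delta : S -> action -> ('I_n -> option Msg) -> S.
Variable s0 : 'I_n -> S.
Variable F : nat -> 'I_n -> 'I_n -> bool.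

Fixpoint gstate (m : nat) : 'I_n -> S :=
  match m with
  | 0 => s0
  | m'.+1 =>
      let g := gstate m' in
      fun i => delta (g i) (P (g i))
                 (fun k => if F m' k i then mu k i (g k) (P (g k)) else None)
  end.

(** message sent from i to j in round m+1 *)
Definition sent (m : nat) (i j : 'I_n) : option Msg :=
  let g := gstate m in mu i j (g i) (P (g i)).

Definition msgs_upto (M : nat) : nat :=
  \sum_(m < M) \sum_(i < n) \sum_(j < n) (isSome (sent m i j)).

Definition bits_upto (size : Msg -> nat) (M : nat) : nat :=
  \sum_(m < M) \sum_(i < n) \sum_(j < n)
     (if sent m i j is Some x then size x else 0).
End Run.

Definition rd_of (n : nat) (r : 'I_n -> option bool) : option bool :=
  if [exists k, r k == Some false] then Some false
  else if [exists k, r k == Some true] then Some true else None.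

Definition upd_decided (d : option bool) (a : action) : option bool :=
  if a is Decide v then Some v else d.

Record mstate := MState { mtime : nat; minit : bool;
                          mdecided : option bool; mrd : option bool }.

Definition mu_min (n : nat) (i j : 'I_n) (s : mstate) (a : action) : option bool :=
  if a is Decide v then Some v else None.

Definition delta_min (n : nat) (s : mstate) (a : action) (r : 'I_n -> option bool)
  : mstate :=
  MState (mtime s).+1 (minit s) (upd_decided (mdecided s) a) (rd_of r).

Definition s0_min (n : nat) (init : 'I_n -> bool) (i : 'I_n) : mstate :=
  MState 0 (init i) None None.

Definition Pmin (t : nat) (s : mstate) : action :=
  if mdecided s != None then Noop
  else if ~~ minit s || (mrd s == Some false) then Decide false
  else if mtime s == t.+1 then Decide true
  else Noop.

Definition msgs_min (n t : nat) (init : 'I_n -> bool)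
  (F : nat -> 'I_n -> 'I_n -> bool) (M : nat) : nat :=
  msgs_upto (Pmin t) (@mu_min n) (@delta_min n) (s0_min init) F M.

Record bstate := BState { btime : nat; binit : bool; bdecided : option bool;
                          brd : option bool; bcnt : nat }.

(** messages: [BDec v] is the value v, [BInit1] is (init,1) *)
Inductive bmsg := BDec of bool | BInit1.

Definition mu_basic (n : nat) (i j : 'I_n) (s : bstate) (a : action) : option bmsg :=
  match a with
  | Decide v => Some (BDec v)
  | Noop => if binit s && (bdecided s == None) && (brd s == None)
            then Some BInit1 else None
  end.

Definition dec_of (x : option bmsg) : option bool :=
  if x is Some (BDec v) then Some v else None.

Definition delta_basic (n : nat) (s : bstate) (a : action) (r : 'I_n -> option bmsg)
  : bstate :=
  let rv := fun k => dec_of (r k) in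
  BState (btime s).+1 (binit s) (upd_decided (bdecided s) a) (rd_of rv)
    (if (bdecided s == None) && (rd_of rv == None)
     then #|[pred k | if r k is Some BInit1 then true else false]| else 0).

Definition s0_basic (n : nat) (init : 'I_n -> bool) (i : 'I_n) : bstate :=
  BState 0 (init i) None None 0.

(** protocol P^basic; "#1_i > n - time_i" is read over the integers,
    i.e. as #1_i + time_i > n *)
Definition Pbasic (n : nat) (s : bstate) : action :=
  if bdecided s != None then Noop
  else if ~~ binit s || (brd s == Some false) then Decide false
  else if (n < bcnt s + btime s) || (brd s == Some true) then Decide true
  else Noop.

(** constant-size encoding of the three message values: 2 bits each *)
Definition bmsg_bits (x : bmsg) : nat := 2.

Definition bits_basic (n : nat) (init : 'I_n -> bool)
  (F : nat -> 'I_n -> 'I_n -> bool) (M : nat) : nat :=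
  bits_upto (Pbasic n) (@mu_basic n) (@delta_basic n) (s0_basic init) F bmsg_bits M.

(* Main.v *)
Require Import Defs.
From mathcomp Require Import all_boot zify.
Set Warnings "-notation-overridden".

Definition isdec (a : action) : nat := if a is Decide _ then 1 else 0.

Section Min.
Variables (n t : nat) (init : 'I_n -> bool) (F : nat -> 'I_n -> 'I_n -> bool).
Let g := gstate (Pmin t) (@mu_min n) (@delta_min n) (s0_min init) F.

Lemma gmS m i : g m.+1 i = delta_min (g m i) (Pmin t (g m i))
   (fun k => if F m k i then mu_min k i (g m k) (Pmin t (g m k)) else None).
Proof. by []. Qed.

Lemma mtimeE m i : mtime (g m i) = m.
Proof. by elim: m => [|m IH] //; rewrite gmS /= IH. Qed.

Lemma min_inv M i : \sum_(m < M) isdec (Pmin t (g m i)) = (mdecided (g M i) != None).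
Proof.
elim: M => [|M IH]; first by rewrite big_ord0.
rewrite big_ord_recr IH gmS /=.
rewrite /Pmin; case: (mdecided (g M i)) => [v|] //=.
by case: ifP => _ //; case: ifP.
Qed.

Lemma min_decided M i : t.+2 <= M -> mdecided (g M i) != None.
Proof.
elim: M => [|M IH] // H.
rewrite gmS /=.
move: H; rewrite leq_eqVlt => /orP [/eqP [<-]|H].
  rewrite /Pmin mtimeE eqxx; case: (mdecided _) => [v|] //=.
  by case: ifP.
move: (IH H); case: (mdecided (g M i)) => [v|] // _; by case: (Pmin t _).
Qed.

Lemma msgs_min_val M : t.+2 <= M -> msgs_min t init F M = n ^ 2.
Proof.
move=> HM; rewrite /msgs_min /msgs_upto.
transitivity (\sum_(m < M) \sum_(i < n) n * isdec (Pmin t (g m i))).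
  apply: eq_bigr => m _; apply: eq_bigr => i _.
  rewrite /sent -/g.
  rewrite (eq_bigr (fun _ => isdec (Pmin t (g m i)))); last first.
    by move=> j _; case: (Pmin t _).
  by rewrite sum_nat_const card_ord.
rewrite exchange_big /=.
transitivity (\sum_(i < n) n).
  by apply: eq_bigr => i _; rewrite -big_distrr /= min_inv min_decided // muln1.
by rewrite sum_nat_const card_ord.
Qed.
End Min.

Lemma rd_of_None n (r : 'I_n -> option bool) k : rd_of r = None -> r k = None.
Proof.
rewrite /rd_of; case: ifP => // /existsPn H0; case: ifP => // /existsPn H1 _.
move: (H0 k) (H1 k); case: (r k) => // [[]] //; by rewrite eqxx.
Qed.

Lemma rd_of_Some n (r : 'I_n -> option bool) k v : r k = Some v -> rd_of r <> None.
Proof. move=> H /(@rd_of_None _ _ k); by rewrite H. Qed.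

Section Basic.
Variables (n t : nat) (init : 'I_n -> bool) (N : {set 'I_n}) (F : nat -> 'I_n -> 'I_n -> bool).
Hypothesis HSO : SO t N F.
Let g := gstate (Pbasic n) (@mu_basic n) (@delta_basic n) (s0_basic init) F.
Let rv m i := fun k => if F m k i then mu_basic k i (g m k) (Pbasic n (g m k)) else None.

Lemma gbS m i : g m.+1 i = delta_basic (g m i) (Pbasic n (g m i)) (rv m i).
Proof. by []. Qed.

Lemma btimeE m i : btime (g m i) = m.
Proof. by elim: m => [|m IH] //; rewrite gbS /= IH. Qed.

Lemma binitE m i : binit (g m i) = init i.
Proof. by elim: m => [|m IH] //; rewrite gbS /= IH. Qed.

Lemma bdecS m i : bdecided (g m.+1 i) = upd_decided (bdecided (g m i)) (Pbasic n (g m i)).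
Proof. by rewrite gbS. Qed.

Lemma bdec_mono a b i : a <= b -> bdecided (g a i) != None -> bdecided (g b i) != None.
Proof.
move=> /subnK <-; elim: (b - a) => [|d IH] // H.
rewrite addSn bdecS; move: (IH H); case: bdecided => // v _; by case: Pbasic.
Qed.

Lemma Pbasic_rd s : bdecided s = None -> brd s <> None -> exists v, Pbasic n s = Decide v.
Proof.
move=> Hd Hr; rewrite /Pbasic Hd /=.
case: (brd s) Hr => // [[]] _; case: (binit s) => /=; try by eexists.
by rewrite orbT; eexists.
Qed.

Lemma bdec_exists k j : bdecided (g k j) != None -> exists2 k', k' < k & exists v, Pbasic n (g k' j) = Decide v.
Proof.
elim: k => [|k IH] //.
rewrite bdecS; case E: (bdecided (g k j)) => [v|] /=.
  move=> _; case: IH; first by rewrite E.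
  move=> k' Hk Hv; exists k' => //; exact: ltnW.
case P: (Pbasic n (g k j)) => [v|] // _; exists k => //; by exists v.
Qed.

Lemma init1_small m i : Pbasic n (g m i) = Noop ->
  binit (g m i) && (bdecided (g m i) == None) && (brd (g m i) == None) -> m <= t.
Proof.
case: m => [|k]; first done.
move=> HP /andP [/andP [Hi /eqP Hd] /eqP Hr].
have Hdk : bdecided (g k i) = None.
  move: Hd; rewrite bdecS; case: (bdecided (g k i)) => // v; by case: Pbasic.
have Hrd : rd_of (fun x => dec_of (rv k i x)) = None by move: Hr; rewrite gbS.
have Hc : bcnt (g k.+1 i) = #|[pred x | if rv k i x is Some BInit1 then true else false]|.
  by rewrite gbS /= Hdk Hrd.
have HN : #|N| <= bcnt (g k.+1 i).
  rewrite Hc; apply: subset_leq_card; apply/subsetP => j Hj; rewrite inE.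
  have HF : F k j i.
    case E: (F k j i) => //; by move: (proj2 HSO _ _ _ E); rewrite Hj.
  move: (@rd_of_None _ _ j Hrd); rewrite /rv HF /mu_basic.
  case Pj: (Pbasic n (g k j)) => [v|] //.
  case: ifP => // Hcond _.
  move: Pj; rewrite /Pbasic.
  case Ed: (bdecided (g k j) != None) => /=.
    move=> _; case: (@bdec_exists k j Ed) => k' Hk' [v Hv].
    have Hr' : brd (g k'.+1 i) <> None.
      rewrite gbS /=; apply: (@rd_of_Some _ _ j v).
      rewrite /rv Hv /=.
      have HF' : F k' j i.
        case E: (F k' j i) => //; by move: (proj2 HSO _ _ _ E); rewrite Hj.
      by rewrite HF'.
    have Hd' : bdecided (g k'.+1 i) = None.
      case E: (bdecided (g k'.+1 i)) => [w|] //.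
      have := @bdec_mono k'.+1 k.+1 i (ltnW Hk'); rewrite E Hd => /(_ isT) //.
    case: (@Pbasic_rd _ Hd' Hr') => w Hw.
    have := @bdec_mono k'.+2 k.+1 i Hk'; rewrite bdecS Hd' Hw Hd => /(_ isT) //.
  move: Ed Hcond => /negbFE /eqP ->; rewrite eqxx andbT.
  case: (binit (g k j)) => //=.
  case: (brd (g k j)) => // [[]] //=; by rewrite orbT.
have H : ~~ (n < bcnt (g k.+1 i) + k.+1).
  apply/negP => Hlt; move: HP; rewrite /Pbasic Hd Hr Hi btimeE Hlt.
  by rewrite orTb.
case: HSO => HcN _.
have := cardsC N; rewrite card_ord => Hn.
move: H; rewrite -leqNgt => H.
move: HN H HcN Hn; lia.
Qed.

Lemma basic_inv M i : \sum_(m < M) isdec (Pbasic n (g m i)) = (bdecided (g M i) != None).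
Proof.
elim: M => [|M IH]; first by rewrite big_ord0.
rewrite big_ord_recr IH bdecS.
rewrite /Pbasic; case: (bdecided (g M i)) => [v|] //=.
by case: ifP => _ //; case: ifP.
Qed.

Lemma pointwise m i j :
  (if sent (Pbasic n) (@mu_basic n) (@delta_basic n) (s0_basic init) F m i j is Some x
   then bmsg_bits x else 0) <= 2 * ((m <= t) + isdec (Pbasic n (g m i))).
Proof.
rewrite /sent -/g /mu_basic.
case E: (Pbasic n (g m i)) => [v|]; first by rewrite /=; case: (m <= t).
case: ifP => // H.
by rewrite (@init1_small m i E H).
Qed.

Lemma sum_le_t M : \sum_(m < M) (m <= t : nat) <= t.+1.
Proof.
elim: M => [|M IH]; first by rewrite big_ord0.
rewrite big_ord_recr /=.
case: (leqP M t) => H /=; last by rewrite addn0.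
have : \sum_(m < M) (m <= t : nat) <= M.
  apply: (@leq_trans (\sum_(m < M) 1)); first by apply: leq_sum => x _; exact: leq_b1.
  by rewrite sum_nat_const card_ord muln1.
move=> Hs; apply: leq_trans (leq_add Hs (leqnn 1)) _; by rewrite addn1 ltnS.
Qed.

Lemma bits_bound M : bits_basic init F M <= 4 * n ^ 2 * t.+1.
Proof.
rewrite /bits_basic /bits_upto.
apply: (@leq_trans (\sum_(m < M) \sum_(i < n) n * (2 * ((m <= t) + isdec (Pbasic n (g m i)))))).
  apply: leq_sum => m _; apply: leq_sum => i _.
  rewrite -[X in _ <= X * _](card_ord n) -sum_nat_const.
  by apply: leq_sum => j _; apply: pointwise.
rewrite exchange_big /=.
apply: (@leq_trans (\sum_(i < n) n * (2 * (t.+1 + 1)))); last first.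
  rewrite sum_nat_const card_ord expnS expn1; lia.
apply: leq_sum => i _.
rewrite -big_distrr -big_distrr /= big_split /= basic_inv.
rewrite leq_mul2l; apply/orP; right; rewrite leq_mul2l; apply/orP; right.
apply: leq_add; first exact: sum_le_t.
by case: (_ != _).
Qed.
End Basic.

Theorem mainTheorem13 :
  (forall (n t : nat), t + 2 <= n ->
     forall (init : 'I_n -> bool) (N : {set 'I_n}) (F : nat -> 'I_n -> 'I_n -> bool),
       SO t N F ->
       exists M0 : nat, forall M : nat, M0 <= M -> msgs_min t init F M = n ^ 2)
  /\
  (exists C : nat, forall (n t : nat), t + 2 <= n ->
     forall (init : 'I_n -> bool) (N : {set 'I_n}) (F : nat -> 'I_n -> 'I_n -> bool),
       SO t N F ->
       forall M : nat, bits_basic init F M <= C * n ^ 2 * t.+1).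
Proof.
split.
  move=> n t _ init N F _; exists t.+2 => M HM; exact: msgs_min_val.
exists 4 => n t _ init N F HSO M; exact: (@bits_bound n t init N F HSO M).
Qed.
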